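(* Let $N:=\lceil 4(1-\gamma)^{-1}\rceil$, $\Delta_0:=(1-\gamma)^{-1}\max_{s\in\mathcal S}g^{\pi_0}(s)$, and let $\bar D>0$ satisfy $\max_{s\in\mathcal S}\max_{\pi,\pi'}D^{\pi}_{\pi'}(s)\le\bar D$ (maximum over all policies). Let PMD be run from $\pi_0$ with step sizes $\eta_t=2^t\cdot\bar D/\Delta_0$. Then for all $t\ge0$, $$V^{\pi_t}(s)-V^{\pi^*}(s)\le 2^{-\lfloor t/N\rfloor}\Delta_0\quad\forall s\in\mathcal S.$$
   Context: An infinite-horizon discounted MDP: finite state space $\mathcal S$, finite action space $\mathcal A$, transition probabilities $\mathcal P(s'\mid s,a)$, cost $c$, discount $\gamma\in[0,1)$. A policy $\pi$ assigns $\pi(\cdot\mid s)\in\Delta_{|\mathcal A|}$ (probability simplex). Let $\omega$ be a differentiable convex distance-generating function on $\Delta_{|\mathcal A|}$ and $D^{\pi'}_{\pi}(s):=\omega(\pi'(\cdot\mid s))-\omega(\pi(\cdot\mid s))-\langle\nabla\omega(\pi(\cdot\mid s)),\pi'(\cdot\mid s)-\pi(\cdot\mid s)\rangle$. For each $s$, $p\mapsto h^p(s)$ is closed convex on $\Delta_{|\mathcal A|}$ and $\mu_h$-strongly convex ($\mu_h\ge0$) w.r.t. this Bregman distance. $V^\pi(s)=\mathbb E[\sum_{t\ge0}\gamma^t(c(s_t,a_t)+h^{\pi(\cdot\mid s_t)}(s_t))\mid s_0=s,\ a_t\sim\pi(\cdot\mid s_t),\ s_{t+1}\sim\mathcal P(\cdot\mid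 s_t,a_t)]$, $Q^\pi(s,a)$ the same with $a_0=a$. $\pi^*$ is an optimal policy ($V^{\pi^*}\le V^\pi$ pointwise for all $\pi$). Advantage: $\psi^\pi(s,p):=\langle Q^\pi(s,\cdot),p\rangle-V^\pi(s)+h^p(s)-h^{\pi(\cdot\mid s)}(s)$; gap $g^\pi(s):=\max_{p\in\Delta_{|\mathcal A|}}\{-\psi^\pi(s,p)\}$. PMD: $\pi_{t+1}(\cdot\mid s)=\operatorname{argmin}_{p\in\Delta_{|\mathcal A|}}\{\eta_t[\langle Q^{\pi_t}(s,\cdot),p\rangle+h^p(s)]+\omega(p)-\omega(\pi_t(\cdot\mid s))-\langle\nabla\omega(\pi_t(\cdot\mid s)),p-\pi_t(\cdot\mid s)\rangle\}$ for all $s$. *)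

(* Defs.v *)
From HB Require Import structures.
From mathcomp Require Import all_boot all_order all_algebra.
From mathcomp Require Import all_classical all_reals all_analysis.
Set Implicit Arguments. Unset Strict Implicit. Unset Printing Implicit Defensive.
Import Order.TTheory GRing.Theory Num.Theory.
Local Open Scope classical_set_scope.
Local Open Scope ring_scope.

Section PMD.
Variables (R : realType) (S A : finType).

Definition simplex : set (A -> R) :=
  [set p | (forall a, 0 <= p a) /\ \sum_a p a = 1].

Definition dotA (u v : A -> R) : R := \sum_a u a * v a.

(* sup-norm distance on A -> R (all norms are equivalent in finite dim.) *)
Definition supdist (p q : A -> R) : R := \big[Num.max/0]_a `|p a - q a|.

Definition is_policy (pi : S -> A -> R) : Prop := forall s, simplex (pi s).

Definition breg (omega : (A -> R) -> R) (gomega : (A -> R) -> A -> R)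
  (p' p : A -> R) : R :=
  omega p' - omega p - dotA (gomega p) (fun a => p' a - p a).

Definition convex_on_simplex (f : (A -> R) -> R) : Prop :=
  forall p q (l : R), simplex p -> simplex q -> 0 <= l <= 1 ->
    f (fun a => l * p a + (1 - l) * q a) <= l * f p + (1 - l) * f q.

(* closed (= lower semicontinuous) on the simplex *)
Definition lsc_on_simplex (f : (A -> R) -> R) : Prop :=
  forall p (r : R), simplex p -> r < f p ->
    exists e : R, 0 < e /\ forall q, simplex q -> supdist q p < e -> r < f q.

Definition grad_on_simplex (omega : (A -> R) -> R) (gomega : (A -> R) -> A -> R)
  : Prop :=
  forall p, simplex p -> forall e : R, 0 < e -> exists d : R, 0 < d /\
    forall v : A -> R, supdist v (fun _ => 0) < d ->
      `| omega (fun a => p a + v a) - omega p - dotA (gomega p) v |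
        <= e * supdist v (fun _ => 0).

(* mu-strong convexity w.r.t. the Bregman distance of omega:
   p |-> f p - mu * omega p is convex on the simplex *)
Definition strongly_convex_wrt (mu : R) (omega : (A -> R) -> R)
  (f : (A -> R) -> R) : Prop :=
  convex_on_simplex (fun p => f p - mu * omega p).

Variables (P : S -> A -> S -> R) (c : S -> A -> R) (gamma : R)
  (h : S -> (A -> R) -> R).

Definition rpi (pi : S -> A -> R) (s : S) : R :=
  \sum_a pi s a * c s a + h s (pi s).

Definition stepd (pi : S -> A -> R) (mu : S -> R) : S -> R :=
  fun s' => \sum_s \sum_a mu s * pi s a * P s a s'.

Definition distt (pi : S -> A -> R) (mu : S -> R) (t : nat) : S -> R :=
  iter t (stepd pi) mu.

Definition dirac (s : S) : S -> R := fun s' => if s' == s then 1 else 0.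

(* V^pi(s) = E[ sum_t gamma^t (c(s_t,a_t) + h^{pi(.|s_t)}(s_t)) | s_0 = s ] *)
Definition Vf (pi : S -> A -> R) (s : S) : R :=
  \big[+%R/0%R]_(0 <= t <oo) (gamma ^+ t * \sum_s' distt pi (dirac s) t s' * rpi pi s').

(* Q^pi(s,a): same with a_0 = a; then s_1 ~ P(.|s,a) and pi is followed *)
Definition Qf (pi : S -> A -> R) (s : S) (a : A) : R :=
  c s a + h s (pi s) +
  \big[+%R/0%R]_(0 <= t <oo) (gamma ^+ t.+1 * \sum_s' distt pi (P s a) t s' * rpi pi s').

Definition psi (pi : S -> A -> R) (s : S) (p : A -> R) : R :=
  dotA (Qf pi s) p - Vf pi s + h s p - h s (pi s).

Definition gap (pi : S -> A -> R) (s : S) : R :=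
  sup [set - psi pi s p | p in simplex].

Definition Delta0 (pi0 : S -> A -> R) : R :=
  (1 - gamma)^-1 * sup (range (gap pi0)).

Definition Nconst : nat := `|Num.ceil (4 / (1 - gamma))|%N.

Definition pmd_obj (omega : (A -> R) -> R) (gomega : (A -> R) -> A -> R)
  (eta : R) (pi : S -> A -> R) (s : S) (p : A -> R) : R :=
  eta * (dotA (Qf pi s) p + h s p) + breg omega gomega p (pi s).

End PMD.

(* Main.v *)
Require Import Defs.
From HB Require Import structures.
From mathcomp Require Import all_boot all_order all_algebra.
From mathcomp Require Import all_classical all_reals all_analysis.
From mathcomp Require Import ring lra.
Import Order.TTheory GRing.Theory Num.Theory.
Import numFieldNormedType.Exports.
Local Open Scope classical_set_scope.
Local Open Scope ring_scope.
Lemma bernoulli_pow (R : realType) (g : R) (n : nat) :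
  0 <= g <= 1 -> g ^+ n * (1 + n%:R * (1 - g)) <= 1.
Proof.
move=> /andP[g0 g1]; elim: n => [|n IH]; first by rewrite expr0 mul0r addr0 mulr1.
have gn0 : 0 <= g ^+ n by apply: exprn_ge0.
have gn1 : g ^+ n <= 1 by apply: exprn_ile1.
rewrite exprS -natr1.
have -> : g * g ^+ n * (1 + (n%:R + 1) * (1 - g)) =
  g * (g ^+ n * (1 + n%:R * (1 - g))) + g * g ^+ n * (1 - g) by ring.
have h1 : g * (g ^+ n * (1 + n%:R * (1 - g))) <= g by rewrite ler_piMr.
have h2 : g * g ^+ n * (1 - g) <= 1 - g.
  have gg1 : g * g ^+ n <= 1 by rewrite mulr_ile1.
  have gg0 : 0 <= g * g ^+ n by rewrite mulr_ge0.
  nra.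
lra.
Qed.

Lemma Qcap {R : realType} {Q : nat -> R -> Prop}
  (Q1 : forall t b, Q t b -> Q t.+1 b) t b k : Q t b -> Q (t + k)%N b.
Proof. by move=> H; elim: k => [|k IH]; rewrite ?addn0 ?addnS //; apply: Q1. Qed.

Lemma pow2_ge1 (R : realType) (m : nat) : 1 <= (2:R) ^+ m.
Proof. by apply: exprn_ege1; lra. Qed.

Lemma block (R : realType) (g : R) (N : nat) (Q : nat -> R -> Prop) (T : nat) (B : R)
  (hg : 0 <= g < 1) (hN : (4 <= N)%N) (hNu : 4 <= N%:R * (1 - g))
  (Qm : forall t b b', Q t b -> b <= b' -> Q t b')
  (Q1 : forall t b, Q t b -> Q t.+1 b)
  (Q2 : forall k b, Q (T + k)%N b -> Q (T + k).+1 (g * b + B / 2 ^+ k))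
  (hB : 0 <= B) (QT : Q T B) : Q (T + N)%N (B / 2).
Proof.
case/andP: hg => g0 g1.
have cap := @Qcap _ _ Q1.
have [gh|gh] := lerP (1/2) g.
  have inv : forall m, Q (T + (4 + m))%N (g ^+ m * B + B * (1/8 - (8 * 2 ^+ m)^-1)).
    elim=> [|m IH].
      apply: (Qm _ _ _ (cap _ _ 4%N QT)).
      by rewrite expr0 mul1r; lra.
    have := Q2 _ _ IH; rewrite -addnS -addSn => H; apply: (Qm _ _ _ H).
    set e := (2:R) ^+ m.
    have e1 : 1 <= e by apply: pow2_ge1.
    have -> : (2:R) ^+ (4 + m) = 16 * e by rewrite exprD; congr (_ * _); rewrite !exprS expr0; lra.
    rewrite exprS.
    have x0 : 0 <= B / e by rewrite divr_ge0 //; lra.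
    have xB : B / e <= B by rewrite ler_pdivrMr ?ler_peMr //; lra.
    have en0 : e != 0 by apply/eqP; lra.
    have -> : B / (16 * e) = (B / e) / 16 by field.
    have -> : B * (1 / 8 - (8 * e)^-1) = B / 8 - (B / e) / 8 by field.
    rewrite exprS -/e.
    have -> : B * (1 / 8 - (8 * (2 * e))^-1) = B / 8 - (B / e) / 16 by field.
    nra.
  have hN4 : (N = 4 + (N - 4))%N by rewrite subnKC.
  have := inv (N - 4)%N; rewrite -hN4 => H; apply: (Qm _ _ _ H).
  set n := (N - 4)%N.
  have hn : n%:R = N%:R - 4 :> R by rewrite /n natrB.
  have hb : g ^+ n * (1 + n%:R * (1 - g)) <= 1 by apply: bernoulli_pow; rewrite g0 ltW.
  have gn0 : 0 <= g ^+ n by apply: exprn_ge0.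
  have hn2 : 2 <= n%:R * (1 - g) by rewrite hn; lra.
  have gn3 : g ^+ n <= 1/3 by nra.
  have e1 : 1 <= (2:R) ^+ n by apply: pow2_ge1.
  have : 0 <= B * (8 * 2 ^+ n)^-1 by rewrite mulr_ge0 // invr_ge0; lra.
  have : g ^+ n * B <= B / 3 by nra.
  lra.
have inv : forall m, Q (T + m)%N (g ^+ m * B + m%:R * 2 * B / 2 ^+ m).
  elim=> [|m IH]; first by rewrite addn0; apply: (Qm _ _ _ QT); rewrite expr0 !mul0r mul1r addr0.
  have := Q2 _ _ IH; rewrite -addnS => H; apply: (Qm _ _ _ H).
  set e := (2:R) ^+ m.
  have e1 : 1 <= e by apply: pow2_ge1.
  have x0 : 0 <= B / e by rewrite divr_ge0 //; lra.
  rewrite exprS -natr1.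
  have -> : m%:R * 2 * B / e = 2 * m%:R * (B / e) by rewrite mulrA (mulrC _ 2).
  have en0 : e != 0 by apply/eqP; lra.
  have -> : m.+1%:R * 2 * B / 2 ^+ m.+1 = (m%:R + 1) * (B / e) :> R.
    by rewrite exprS -natr1 -/e; field.
  have m0 : 0 <= m%:R :> R by apply: ler0n.
  have : 0 <= m%:R * (B / e) by apply: mulr_ge0.
  nra.
have [g00|gpos] := eqVneq g 0.
  have := inv 4%N; rewrite g00 expr0n /= mul0r add0r => H.
  have -> : N = (4 + (N - 4))%N by rewrite subnKC.
  rewrite addnA; apply: cap; apply: (Qm _ _ _ H).
  have -> : (2:R) ^+ 4 = 16 by rewrite !exprS expr0; lra.
  lra.
have hN5 : (5 <= N)%N.
  rewrite ltn_neqAle hN andbT; apply/negP => /eqP h4.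
  move: hNu; rewrite -h4 => hNu.
  have : 0 < g by rewrite lt_neqAle eq_sym gpos g0.
  lra.
have := inv 5%N => H.
have -> : N = (5 + (N - 5))%N by rewrite subnKC.
rewrite addnA; apply: cap; apply: (Qm _ _ _ H).
have -> : (2:R) ^+ 5 = 32 by rewrite !exprS expr0; lra.
have g5 : g ^+ 5 <= (1/2) ^+ 5 by rewrite lerXn2r // ?nnegrE //; lra.
have h32 : ((1:R)/2) ^+ 5 = 1/32 by rewrite !exprS expr0; lra.
rewrite h32 in g5.
have : g ^+ 5 * B <= B / 32 by nra.
lra.
Qed.

Lemma arith_main (R : realType) (g D0 : R) (N : nat) (Q : nat -> R -> Prop)
  (hg : 0 <= g < 1) (hN : (4 <= N)%N) (hNu : 4 <= N%:R * (1 - g)) (hD : 0 <= D0)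
  (Qm : forall t b b', Q t b -> b <= b' -> Q t b')
  (Q1 : forall t b, Q t b -> Q t.+1 b)
  (Q2 : forall t b, Q t b -> Q t.+1 (g * b + D0 / 2 ^+ t))
  (Q0 : Q 0%N D0) : forall t, Q t (2 ^- (t %/ N) * D0).
Proof.
have cap := @Qcap _ _ Q1.
have blk : forall j, Q (j * N)%N (D0 / 2 ^+ j).
  elim=> [|j IH]; first by rewrite mul0n expr0 divr1.
  have hB : 0 <= D0 / 2 ^+ j by rewrite divr_ge0 // exprn_ge0.
  have Q2' : forall k b, Q (j * N + k)%N b -> Q (j * N + k).+1 (g * b + D0 / 2 ^+ j / 2 ^+ k).
    move=> k b Hb; apply: (Qm _ _ _ (Q2 _ _ Hb)).
    rewrite lerD2l -mulrA -invfM -exprD.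
    rewrite ler_pdivlMr ?exprn_gt0 // mulrAC ler_pdivrMr ?exprn_gt0 //.
    rewrite ler_wpM2l // ler_eXn2l //; last by lra.
    by rewrite leq_add2r leq_pmulr // (leq_trans _ hN).
  have H := @block R g N Q (j * N)%N (D0 / 2 ^+ j) hg hN hNu Qm Q1 Q2' hB IH.
  rewrite mulSn addnC exprS; apply: (Qm _ _ _ H).
  have e1 := pow2_ge1 R j.
  have en0 : (2:R) ^+ j != 0 by apply/eqP; lra.
  by rewrite le_eqVlt; apply/orP; left; apply/eqP; field.
move=> t.
rewrite {1}(divn_eq t N) mulrC; apply: cap; exact: blk.
Qed.

Section Bellman.
Variables (R : realType) (S A : finType) (P : S -> A -> S -> R) (c : S -> A -> R)
  (gamma : R) (h : S -> (A -> R) -> R).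
Variable pi : S -> A -> R.

Definition Kp s s0 := \sum_a pi s a * P s a s0.
Definition ff t s := \sum_s' distt P pi (Defs.dirac R s) t s' * rpi c h pi s'.

Lemma sum_dirac (F : S -> R) s : \sum_s0 Defs.dirac R s s0 * F s0 = F s.
Proof.
rewrite (bigD1 s) //= big1 => [|s0 /negbTE ne]; first by rewrite /Defs.dirac eqxx mul1r addr0.
by rewrite /Defs.dirac ne mul0r.
Qed.

Lemma sum_dirac' (F : S -> R) s : \sum_s0 F s0 * Defs.dirac R s0 s = F s.
Proof.
rewrite (bigD1 s) //= big1 => [|s0 /negbTE ne]; first by rewrite /Defs.dirac eqxx mulr1 addr0.
by rewrite /Defs.dirac eq_sym ne mulr0.
Qed.

Lemma distt_lin mu t s' :
  distt P pi mu t s' = \sum_s0 mu s0 * distt P pi (Defs.dirac R s0) t s'.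
Proof.
elim: t s' => [|t IH] s'.
  by rewrite /distt /= sum_dirac'.
have dS : forall m, distt P pi m t.+1 = stepd P pi (distt P pi m t) by [].
rewrite dS /stepd.
under eq_bigr => s _ do under eq_bigr => a _ do rewrite IH !mulr_suml.
under [RHS]eq_bigr => s0 _ do rewrite dS /stepd mulr_sumr.
under [RHS]eq_bigr => s0 _ do under eq_bigr => s _ do rewrite mulr_sumr.
rewrite [RHS]exchange_big /=; apply: eq_bigr => s _.
rewrite [RHS]exchange_big /=; apply: eq_bigr => a _.
by apply: eq_bigr => s0 _; rewrite !mulrA.
Qed.

Lemma ff0 s : ff 0 s = rpi c h pi s.
Proof. by rewrite /ff /distt /= sum_dirac. Qed.

Lemma stepd_dirac s s0 : stepd P pi (Defs.dirac R s) s0 = Kp s s0.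
Proof.
rewrite /stepd.
under eq_bigr => s1 _ do under eq_bigr => a _ do rewrite -mulrA.
under eq_bigr => s1 _ do rewrite -mulr_sumr.
by rewrite sum_dirac.
Qed.

Lemma ffS t s : ff t.+1 s = \sum_s0 Kp s s0 * ff t s0.
Proof.
rewrite /ff /distt iterSr -/(distt P pi (stepd P pi (Defs.dirac R s)) t).
under eq_bigr => s' _ do rewrite distt_lin mulr_suml.
rewrite exchange_big /=; apply: eq_bigr => s0 _.
rewrite mulr_sumr; apply: eq_bigr => s' _.
rewrite mulrA; congr (_ * _ * _).
exact: stepd_dirac.
Qed.

Lemma wavg_le (w F : S -> R) b :
  (forall s0, 0 <= w s0) -> \sum_s0 w s0 = 1 -> (forall s0, F s0 <= b) ->
  \sum_s0 w s0 * F s0 <= b.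
Proof.
move=> w0 w1 Fb; apply: (@le_trans _ _ (\sum_s0 w s0 * b)).
  by apply: ler_sum => s0 _; apply: ler_wpM2l.
by rewrite -mulr_suml w1 mul1r.
Qed.

Lemma norm_le_sum (F : S -> R) s : `|F s| <= \sum_s0 `|F s0|.
Proof. by rewrite (bigD1 s) //= lerDl sumr_ge0. Qed.

Hypothesis HP0 : forall s a s', 0 <= P s a s'.
Hypothesis HP1 : forall s a, \sum_s' P s a s' = 1.
Hypothesis Hg : 0 <= gamma < 1.
Hypothesis Hpi : is_policy pi.

Lemma Kp_ge0 s s0 : 0 <= Kp s s0.
Proof. by apply: sumr_ge0 => a _; apply: mulr_ge0 => //; case: (Hpi s). Qed.

Lemma Kp_sum s : \sum_s0 Kp s s0 = 1.
Proof.
rewrite /Kp exchange_big /=; case: (Hpi s) => _ <-; apply: eq_bigr => a _.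
by rewrite -mulr_sumr HP1 mulr1.
Qed.

Lemma ff_bound t s : `|ff t s| <= \sum_s' `|rpi c h pi s'|.
Proof.
elim: t s => [|t IH] s; first by rewrite ff0 norm_le_sum.
rewrite ffS; apply: (le_trans (ler_norm_sum _ _ _)).
under eq_bigr => s0 _ do rewrite normrM (ger0_norm (Kp_ge0 _ _)).
by apply: wavg_le => //; [exact: Kp_ge0 | exact: Kp_sum].
Qed.

Lemma Vf_cvgn s : cvgn (series (fun t => gamma ^+ t * ff t s)).
Proof.
case/andP: Hg => g0 g1.
apply: normed_cvg.
set C := \sum_s' `|rpi c h pi s'|.
apply: (@series_le_cvg _ _ (geometric C gamma)).
- by move=> n; rewrite /= normr_ge0.
- by move=> n; rewrite /geometric /= mulr_ge0 // ?exprn_ge0 // sumr_ge0.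
- move=> n; rewrite /geometric /= normrM (ger0_norm (exprn_ge0 _ g0)) mulrC.
  by apply: ler_wpM2r; [exact: exprn_ge0 | exact: ff_bound].
- by apply: is_cvg_geometric_series; rewrite ger0_norm.
Qed.

Lemma Vf_def s : Vf P c gamma h pi s = limn (series (fun t => gamma ^+ t * ff t s)).
Proof. by []. Qed.

Lemma Vf_cvg s : series (fun t => gamma ^+ t * ff t s) @ \oo --> Vf P c gamma h pi s.
Proof. by rewrite Vf_def; apply: Vf_cvgn. Qed.

Lemma series_rec s n :
  series (fun t => gamma ^+ t * ff t s) n.+1 =
  rpi c h pi s + gamma * \sum_s0 Kp s s0 * series (fun t => gamma ^+ t * ff t s0) n.
Proof.
rewrite /series /= big_nat_recl // expr0 mul1r ff0; congr (_ + _).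
rewrite mulr_sumr.
under [RHS]eq_bigr => s0 _ do rewrite mulr_sumr mulr_sumr.
rewrite [RHS]exchange_big /=; apply: eq_bigr => i _.
rewrite ffS exprS mulr_sumr; apply: eq_bigr => s0 _.
by rewrite -mulrA; congr (_ * _); rewrite mulrCA.
Qed.

Lemma Vf_bellman s :
  Vf P c gamma h pi s = rpi c h pi s + gamma * \sum_s0 Kp s s0 * Vf P c gamma h pi s0.
Proof.
have H1 : (fun n => series (fun t => gamma ^+ t * ff t s) n.+1) @ \oo --> Vf P c gamma h pi s.
  by have := Vf_cvg s; rewrite -cvg_shiftS.
have H2 : (fun n => series (fun t => gamma ^+ t * ff t s) n.+1) @ \oo -->
    rpi c h pi s + gamma * \sum_s0 Kp s s0 * Vf P c gamma h pi s0.
  under eq_cvg do rewrite series_rec.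
  apply: cvgD; first exact: cvg_cst.
  apply: cvgM; first exact: cvg_cst.
  apply: cvg_big; first exact: add_continuous.
  move=> s0 _.
  apply: cvgM; first exact: cvg_cst.
  exact: Vf_cvg.
exact: (cvg_unique _ H1 H2).
Qed.

Lemma Qf_bellman s a :
  Qf P c gamma h pi s a = c s a + h s (pi s) +
    gamma * \sum_s0 P s a s0 * Vf P c gamma h pi s0.
Proof.
rewrite /Qf; congr (_ + _).
have E : forall n, \big[+%R/0%R]_(0 <= t < n)
     (gamma ^+ t.+1 * \sum_s' distt P pi (P s a) t s' * rpi c h pi s') =
   gamma * \sum_s0 P s a s0 * series (fun t => gamma ^+ t * ff t s0) n.
  move=> n; rewrite /series /=.
  rewrite mulr_sumr.
  under [RHS]eq_bigr => s0 _ do rewrite mulr_sumr mulr_sumr.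
  rewrite [RHS]exchange_big /=; apply: eq_bigr => i _.
  have e1 : forall s0, gamma * (P s a s0 * (gamma ^+ i * ff i s0)) =
     gamma ^+ i.+1 * (P s a s0 * ff i s0).
    by move=> s0; rewrite exprS; ring.
  under [RHS]eq_bigr => s0 _ do rewrite e1.
  rewrite -mulr_sumr; congr (_ * _).
  under eq_bigr => s' _ do rewrite distt_lin mulr_suml.
  rewrite exchange_big /=; apply: eq_bigr => s0 _.
  rewrite /ff mulr_sumr; apply: eq_bigr => s' _.
  by rewrite !mulrA.
have H : (fun n => \big[+%R/0%R]_(0 <= t < n)
     (gamma ^+ t.+1 * \sum_s' distt P pi (P s a) t s' * rpi c h pi s')) @ \oo -->
     gamma * \sum_s0 P s a s0 * Vf P c gamma h pi s0.
  under eq_cvg do rewrite E.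
  apply: cvgM; first exact: cvg_cst.
  apply: cvg_big; first exact: add_continuous.
  move=> s0 _; apply: cvgM; first exact: cvg_cst.
  exact: Vf_cvg.
exact: (cvg_lim _ H).
Qed.

End Bellman.

Lemma Lmax (R : realType) (S : finType) (gamma : R) (w : S -> S -> R) (z e : S -> R) (G : R) :
  0 <= gamma < 1 ->
  (forall s s0, 0 <= w s s0) -> (forall s, \sum_s0 w s s0 = 1) ->
  (forall s, z s <= gamma * \sum_s0 w s s0 * z s0 + e s) ->
  (forall s, e s <= G) -> forall s, (1 - gamma) * z s <= G.
Proof.
move=> /andP[g0 g1] w0 w1 hz he s.
case: (@arg_maxP _ R S s xpredT z isT) => s1 _ Hmax.
have hs1 : \sum_s0 w s1 s0 * z s0 <= z s1.
  by apply: wavg_le => // s0; apply: Hmax.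
have h1 := hz s1; have h2 := he s1; have h3 := Hmax s isT.
have h4 : gamma * \sum_s0 w s1 s0 * z s0 <= gamma * z s1 by apply: ler_wpM2l.
have h5 : (1 - gamma) * z s <= (1 - gamma) * z s1 by apply: ler_wpM2l; [lra | exact: h3].
have h6 : (1 - gamma) * z s1 = z s1 - gamma * z s1 by ring.
lra.
Qed.

Section Analysis.
Variables (R : realType) (S A : finType) (P : S -> A -> S -> R) (c : S -> A -> R)
  (gamma : R) (h : S -> (A -> R) -> R).
Hypothesis HP0 : forall s a s', 0 <= P s a s'.
Hypothesis HP1 : forall s a, \sum_s' P s a s' = 1.
Hypothesis Hg : 0 <= gamma < 1.

Definition Tp (p : A -> R) (W : S -> R) s :=
  \sum_a p a * c s a + h s p + gamma * \sum_a p a * \sum_s0 P s a s0 * W s0.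

Definition wgt (p : A -> R) s s0 := \sum_a p a * P s a s0.

Lemma wgt_ge0 p s s0 : simplex p -> 0 <= wgt p s s0.
Proof. by case=> p0 _; apply: sumr_ge0 => a _; apply: mulr_ge0. Qed.

Lemma wgt_sum p s : simplex p -> \sum_s0 wgt p s s0 = 1.
Proof.
case=> _ <-; rewrite /wgt exchange_big /=; apply: eq_bigr => a _.
by rewrite -mulr_sumr HP1 mulr1.
Qed.

Lemma wgt_eq p (W : S -> R) s :
  \sum_a p a * \sum_s0 P s a s0 * W s0 = \sum_s0 wgt p s s0 * W s0.
Proof.
rewrite /wgt; under [RHS]eq_bigr => s0 _ do rewrite mulr_suml.
rewrite [RHS]exchange_big /=; apply: eq_bigr => a _.
by rewrite mulr_sumr; apply: eq_bigr => s0 _; rewrite mulrA.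
Qed.

Lemma T_diff p W1 W2 s :
  Tp p W1 s - Tp p W2 s = gamma * \sum_s0 wgt p s s0 * (W1 s0 - W2 s0).
Proof.
rewrite /Tp -!wgt_eq.
have -> : \sum_a p a * \sum_s0 P s a s0 * (W1 s0 - W2 s0) =
  \sum_a p a * \sum_s0 P s a s0 * W1 s0 - \sum_a p a * \sum_s0 P s a s0 * W2 s0.
  rewrite -sumrB; apply: eq_bigr => a _; rewrite -mulrBr -sumrB; congr (_ * _).
  by apply: eq_bigr => s0 _; rewrite mulrBr.
ring.
Qed.

Lemma T_le p W1 W2 s b : simplex p -> (forall s0, W1 s0 - W2 s0 <= b) ->
  Tp p W1 s - Tp p W2 s <= gamma * b.
Proof.
move=> hp hb; rewrite T_diff; case/andP: Hg => g0 _; apply: ler_wpM2l => //.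
by apply: wavg_le; [move=> s0; exact: wgt_ge0 | exact: wgt_sum | exact: hb].
Qed.

Lemma V_T pi s : is_policy pi -> Vf P c gamma h pi s = Tp (pi s) (Vf P c gamma h pi) s.
Proof.
move=> hpi; rewrite {1}(@Vf_bellman _ _ _ _ c gamma h pi HP0 HP1 Hg hpi) /Tp /rpi; congr (_ + _ * _).
by rewrite wgt_eq.
Qed.

Lemma psi_T pi s p : is_policy pi -> simplex p ->
  psi P c gamma h pi s p = Tp p (Vf P c gamma h pi) s - Vf P c gamma h pi s.
Proof.
move=> hpi [p0 p1]; rewrite /psi /dotA /Tp.
under eq_bigr => a _ do rewrite (@Qf_bellman _ _ _ _ c gamma h pi HP0 HP1 Hg hpi).
have -> : \sum_a (c s a + h s (pi s) + gamma * \sum_s0 P s a s0 * Vf P c gamma h pi s0) * p a =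
  \sum_a p a * c s a + h s (pi s) * \sum_a p a +
  gamma * \sum_a p a * \sum_s0 P s a s0 * Vf P c gamma h pi s0.
  rewrite mulr_sumr mulr_sumr -!big_split /=; apply: eq_bigr => a _; ring.
rewrite p1; ring.
Qed.

End Analysis.

Lemma supdist_le (R : realType) (A : finType) (f : A -> R) b :
  0 <= b -> (forall a, `|f a| <= b) -> supdist f (fun _ => 0) <= b.
Proof.
move=> b0 hb; rewrite /supdist; apply: (big_ind (fun x => x <= b)) => //.
  by move=> x y hx hy; rewrite ge_max hx hy.
by move=> a _; rewrite subr0.
Qed.

Lemma breg_ge0 (R : realType) (A : finType) (omega : (A -> R) -> R)
  (gomega : (A -> R) -> A -> R) p q :
  convex_on_simplex omega -> grad_on_simplex omega gomega ->
  simplex p -> simplex q -> 0 <= breg omega gomega p q.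
Proof.
move=> hc hd sp sq.
set v := fun a => p a - q a.
set D := dotA (gomega q) v.
set K := \sum_a `|v a|.
have K0 : 0 <= K by apply: sumr_ge0.
have key : forall e, 0 < e -> D - e * K <= omega p - omega q.
  move=> e e0.
  have [d [d0 hdd]] := hd q sq e e0.
  set l := Num.min d 1 / (2 * (K + 1)).
  have m0 : 0 < Num.min d 1 by rewrite lt_min d0 ltr01.
  have m1 : Num.min d 1 <= 1 by rewrite ge_min lexx orbT.
  have md : Num.min d 1 <= d by rewrite ge_min lexx.
  have l0 : 0 < l by rewrite /l divr_gt0 //; lra.
  have l1 : l <= 1 by rewrite /l ler_pdivrMr; lra.
  have lK : l * K < d.
    rewrite /l mulrAC ltr_pdivrMr; last by lra.
    have : Num.min d 1 * K <= d * K by apply: ler_wpM2r.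
    nra.
  have hsd : supdist (fun a => l * v a) (fun _ => 0) <= l * K.
    apply: supdist_le; first by rewrite mulr_ge0 // ltW.
    by move=> a; rewrite normrM (gtr0_norm l0) ler_wpM2l ?(ltW l0) // (@norm_le_sum R A v a).
  have hsd0 : 0 <= supdist (fun a => l * v a) (fun _ => 0).
    rewrite /supdist; apply: (big_ind (fun x => 0 <= x)) => //.
    by move=> x y hx hy; rewrite le_max hx.
  have := hdd (fun a => l * v a) (le_lt_trans hsd lK).
  have -> : (fun a => q a + l * v a) = (fun a => l * p a + (1 - l) * q a).
    by apply: funext => a; rewrite /v; ring.
  have -> : dotA (gomega q) (fun a => l * v a) = l * D.
    by rewrite /D /dotA mulr_sumr; apply: eq_bigr => a _; ring.
  move=> hn.
  have hcv' : omega (fun a => l * p a + (1 - l) * q a) <= l * omega p + (1 - l) * omega q.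
    by apply: hc => //; rewrite (ltW l0) l1.
  move: hn; rewrite ler_norml => /andP[h1 _].
  have : e * supdist (fun a => l * v a) (fun _ => 0) <= e * (l * K) by apply: ler_wpM2l => //; apply: ltW.
  move=> h2.
  have h3 : l * D - l * (e * K) <= l * (omega p - omega q).
    move: h1 h2 hcv'; set X := omega _; move=> h1 h2 hcv'.
    have -> : l * (e * K) = e * (l * K) by ring.
    lra.
  rewrite -mulrBr in h3.
  by rewrite -(ler_pM2l l0).
rewrite /breg -/v -/D.
suff : D <= omega p - omega q by lra.
apply/ler_addgt0Pr => e e0.
have := key (e / (K + 1)) (divr_gt0 e0 (_ : 0 < K + 1)).
have Kp1 : 0 < K + 1 by lra.
move=> /(_ Kp1) hk.
have : e / (K + 1) * K <= e.
  rewrite mulrAC ler_pdivrMr //; nra.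
lra.
Qed.

Lemma convex_upper (R : realType) (A : finType) (f : (A -> R) -> R) :
  convex_on_simplex f -> exists M, forall p, simplex p -> f p <= M.
Proof.
move=> hc.
pose e (a : A) := fun b : A => if b == a then (1:R) else 0.
have se : forall a, simplex (e a).
  move=> a; split; first by move=> b; rewrite /e; case: ifP.
  rewrite (bigD1 a) //= big1 => [|b /negbTE nb]; first by rewrite /e eqxx addr0.
  by rewrite /e nb.
exists (\sum_a `|f (e a)|).
have eM : forall a, f (e a) <= \sum_a `|f (e a)|.
  move=> a; apply: le_trans (ler_norm _) _; exact: (@norm_le_sum R A (fun a => f (e a)) a).
have M0 : 0 <= \sum_a `|f (e a)| by apply: sumr_ge0.
suff H : forall l : seq A, forall p, simplex p -> (forall b, b \notin l -> p b = 0) ->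
    f p <= \sum_a `|f (e a)|.
  by move=> p sp; apply: (H (enum A)) => // b; rewrite mem_enum.
elim=> [|a l IH] p [p0 p1] hsupp.
  exfalso; move: p1; rewrite big1 => [|b _]; last exact: hsupp.
  by move=> /eqP; rewrite eq_sym oner_eq0.
have hsplit : p a + \sum_(b | b != a) p b = 1 by rewrite -p1 [RHS](bigD1 a).
have hr0 : 0 <= \sum_(b | b != a) p b by apply: sumr_ge0.
have [pa1|pa1] := eqVneq (p a) 1.
  have -> : p = e a.
    apply: funext => b; rewrite /e; case: eqP => [->//|/eqP nb].
    apply/eqP; rewrite eq_le p0 andbT.
    have : p b <= \sum_(b | b != a) p b.
      by rewrite (bigD1 b) //= lerDl sumr_ge0.
    lra.
  exact: eM.
have pa_le1 : p a <= 1 by lra.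
have pa_lt1 : p a < 1 by rewrite lt_neqAle pa1.
pose q := fun b => if b == a then 0 else p b / (1 - p a).
have sq : simplex q.
  split; first by move=> b; rewrite /q; case: ifP => // _; rewrite divr_ge0 //; lra.
  rewrite (bigD1 a) //= /q eqxx add0r.
  under eq_bigr => b /negbTE nb do rewrite nb.
  rewrite -mulr_suml.
  have -> : \sum_(b | b != a) p b = 1 - p a by lra.
  by rewrite divff //; apply/eqP; lra.
have hq : f q <= \sum_a `|f (e a)|.
  apply: IH => // b nb; rewrite /q; case: eqP => // /eqP nba.
  by rewrite hsupp ?mul0r // in_cons negb_or nb andbT; apply/eqP => eba; move: nba; rewrite eba eqxx.
have -> : p = (fun b => p a * e a b + (1 - p a) * q b).
  apply: funext => b; rewrite /e /q; case: eqP => [->|_]; first by ring.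
  by field; apply/eqP; lra.
apply: le_trans (hc _ _ _ (se a) sq _) _; first by rewrite p0.
have h1 : p a * f (e a) <= p a * \sum_a `|f (e a)| by apply: ler_wpM2l.
have h2 : (1 - p a) * f q <= (1 - p a) * \sum_a `|f (e a)| by apply: ler_wpM2l => //; lra.
lra.
Qed.

Lemma convex_lower (R : realType) (A : finType) (f : (A -> R) -> R) :
  convex_on_simplex f -> exists L, forall p, simplex p -> L <= f p.
Proof.
move=> hc; have [M hM] := @convex_upper _ _ _ hc.
have [n0|npos] := eqVneq #|A| 0%N.
  exists 0 => p [_ p1]; exfalso; move: p1.
  rewrite big_pred0 => [/eqP|a]; first by rewrite eq_sym oner_eq0.
  by move: (card0_eq n0 a); rewrite !inE.
set n : R := #|A|%:R.
have n1 : 1 <= n by rewrite /n ler1n lt0n.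
set q := fun _ : A => n^-1.
have sq : simplex q.
  split; first by move=> a; rewrite /q invr_ge0; lra.
  by rewrite /q sumr_const -/n -[_ *+ _]mulr_natr mulVf //; apply/eqP; lra.
set l := (n + 1)^-1.
have l0 : 0 < l by rewrite /l invr_gt0; lra.
have l1 : l < 1 by rewrite /l invf_lt1; lra.
exists ((f q - (1 - l) * M) / l) => p [p0 p1].
pose p' := fun a => (q a - l * p a) / (1 - l).
have pa1 : forall a, p a <= 1.
  move=> a; rewrite -p1 (bigD1 a) //= lerDl; exact: sumr_ge0.
have sp' : simplex p'.
  split.
    move=> a; rewrite /p' divr_ge0 //; last by lra.
    rewrite subr_ge0 /q /l.
    have : (n + 1)^-1 * p a <= (n + 1)^-1 by rewrite ler_piMr ?invr_ge0 //; lra.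
    suff : (n + 1)^-1 <= n^-1 by lra.
    by rewrite lef_pV2 ?posrE; lra.
  rewrite /p' -mulr_suml sumrB -mulr_sumr p1 mulr1.
  case: sq => _ ->; rewrite divff //; apply/eqP; lra.
have hqp : q = (fun a => l * p a + (1 - l) * p' a).
  by apply: funext => a; rewrite /p'; field; apply/eqP; lra.
have hcv : f q <= l * f p + (1 - l) * f p'.
  by rewrite {1}hqp; apply: hc => //; rewrite (ltW l0) (ltW l1).
have hM' := hM _ sp'.
rewrite ler_pdivrMr // [f p * l]mulrC.
have : (1 - l) * f p' <= (1 - l) * M by apply: ler_wpM2l => //; lra.
lra.
Qed.

Lemma gap_ge (R : realType) (S A : finType) (P : S -> A -> S -> R) (c : S -> A -> R)
  (gamma : R) (h : S -> (A -> R) -> R) (pi : S -> A -> R) s p :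
  convex_on_simplex (h s) -> simplex p ->
  - psi P c gamma h pi s p <= gap P c gamma h pi s.
Proof.
move=> hc sp; rewrite /gap; apply: ub_le_sup; last by exists p.
have [L hL] := @convex_lower _ _ _ hc.
exists (\sum_a `|Qf P c gamma h pi s a| + Vf P c gamma h pi s - L + h s (pi s)).
move=> y [q [q0 q1] <-]; rewrite /psi.
have hq1 : forall a, q a <= 1.
  move=> a; rewrite -q1 (bigD1 a) //= lerDl; exact: sumr_ge0.
have hd : - dotA (Qf P c gamma h pi s) q <= \sum_a `|Qf P c gamma h pi s a|.
  rewrite /dotA -sumrN; apply: ler_sum => a _.
  apply: le_trans (ler_norm _) _; rewrite normrN normrM (ger0_norm (q0 a)).
  by rewrite ler_piMr.
have := hL q (conj q0 q1).
lra.
Qed.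

Lemma range_le (R : realType) (S : finType) (f : S -> R) s : f s <= sup (range f).
Proof.
apply: ub_le_sup; last by exists s.
exists (\sum_s0 `|f s0|) => y [s0 _ <-].
apply: le_trans (ler_norm _) _; exact: (@norm_le_sum R S f s0).
Qed.

Lemma Nconst_props (R : realType) (gamma : R) : 0 <= gamma < 1 ->
  (4 <= Nconst gamma)%N /\ 4 <= (Nconst gamma)%:R * (1 - gamma).
Proof.
move=> /andP[g0 g1].
have u0 : 0 < 1 - gamma by lra.
have x4 : 4 <= 4 / (1 - gamma) by rewrite ler_pdivlMr //; lra.
have c0 : (0 <= Num.ceil (4 / (1 - gamma)))%R by rewrite ceil_ge0; lra.
have hN : (Nconst gamma)%:R = (Num.ceil (4 / (1 - gamma)))%:~R :> R.
  by rewrite /Nconst natr_absz ger0_norm.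
have hc := ceil_ge (4 / (1 - gamma)).
have hNx : 4 / (1 - gamma) <= (Nconst gamma)%:R by rewrite hN.
split.
  have : (4%:R : R) <= (Nconst gamma)%:R by lra.
  by rewrite ler_nat.
have : 4 / (1 - gamma) * (1 - gamma) = 4 by rewrite divfK //; apply/eqP; lra.
have : 4 / (1 - gamma) * (1 - gamma) <= (Nconst gamma)%:R * (1 - gamma).
  by apply: ler_wpM2r => //; apply: ltW.
lra.
Qed.

Theorem theorem3p5 (R : realType) (S A : finType)
  (P : S -> A -> S -> R) (c : S -> A -> R) (gamma : R)
  (h : S -> (A -> R) -> R) (mu_h : R)
  (omega : (A -> R) -> R) (gomega : (A -> R) -> A -> R)
  (Dbar : R) (pit : nat -> S -> A -> R) (pistar : S -> A -> R)
  (HP0 : forall s a s', 0 <= P s a s')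
  (HP1 : forall s a, \sum_s' P s a s' = 1)
  (Hgamma : 0 <= gamma < 1)
  (Hom_cvx : convex_on_simplex omega)
  (Hom_diff : grad_on_simplex omega gomega)
  (Hmu : 0 <= mu_h)
  (Hh_cvx : forall s, convex_on_simplex (h s))
  (Hh_closed : forall s, lsc_on_simplex (h s))
  (Hh_strong : forall s, strongly_convex_wrt mu_h omega (h s))
  (Hstar_pol : is_policy pistar)
  (Hstar_opt : forall pi, is_policy pi ->
     forall s, Vf P c gamma h pistar s <= Vf P c gamma h pi s)
  (HDbar_pos : 0 < Dbar)
  (HDbar : forall s (pi pi' : S -> A -> R), is_policy pi -> is_policy pi' ->
     breg omega gomega (pi s) (pi' s) <= Dbar)
  (Hpi0 : is_policy (pit 0%N))
  (HDelta0 : 0 < Delta0 P c gamma h (pit 0%N))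
  (Hpmd : forall (t : nat) (s : S),
     simplex (pit t.+1 s) /\
     forall p, simplex p ->
       pmd_obj P c gamma h omega gomega
         (2 ^+ t * Dbar / Delta0 P c gamma h (pit 0%N)) (pit t) s (pit t.+1 s)
       <= pmd_obj P c gamma h omega gomega
         (2 ^+ t * Dbar / Delta0 P c gamma h (pit 0%N)) (pit t) s p) :
  forall (t : nat) (s : S),
    Vf P c gamma h (pit t) s - Vf P c gamma h pistar s
      <= 2 ^- (t %/ Nconst gamma)%N * Delta0 P c gamma h (pit 0%N).
Proof.
have Hg := Hgamma; case/andP: Hgamma => g0 g1.
set D0 := Delta0 P c gamma h (pit 0%N).
have VT := @V_T R S A P c gamma h HP0 HP1 Hg.
have PT := @psi_T R S A P c gamma h HP0 HP1 Hg.
have TD := @T_diff R S A P c gamma h.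
have TL := @T_le R S A P c gamma h HP0 HP1 Hg.
have WG := @wgt_ge0 R S A P HP0.
have WS := @wgt_sum R S A P HP1.
have pol : forall t, is_policy (pit t).
  by case=> [|t] //= s; case: (Hpmd t s).
set V := fun t => Vf P c gamma h (pit t).
set Vs := Vf P c gamma h pistar.
have eta_pos : forall t, 0 < 2 ^+ t * Dbar / D0.
  by move=> t; rewrite divr_gt0 // mulr_gt0 // exprn_gt0.
have min_ineq : forall t s p, simplex p ->
   (2 ^+ t * Dbar / D0) * psi P c gamma h (pit t) s (pit t.+1 s)
     + breg omega gomega (pit t.+1 s) (pit t s)
   <= (2 ^+ t * Dbar / D0) * psi P c gamma h (pit t) s p
     + breg omega gomega p (pit t s).
  move=> t s p sp; have := (Hpmd t s).2 p sp; rewrite /pmd_obj /psi -/D0.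
  set e := 2 ^+ t * Dbar / D0.
  have E : forall x y z w, e * (x - y + z - w) = e * (x + z) - e * y - e * w.
    by move=> x y z w; ring.
  rewrite !E; lra.
have breg0 : forall q, breg omega gomega q q = 0.
  move=> q; rewrite /breg /dotA big1 ?subrr ?subr0 // => a _.
  by rewrite subrr mulr0.
have u_le0 : forall t s, psi P c gamma h (pit t) s (pit t.+1 s) <= 0.
  move=> t s.
  have := min_ineq t s (pit t s) (pol t s).
  rewrite breg0 (PT _ s (pit t s) (pol t) (pol t s)).
  rewrite -(VT _ s (pol t)) subrr mulr0 addr0.
  have := @breg_ge0 R A omega gomega (pit t.+1 s) (pit t s) Hom_cvx Hom_diff (pol t.+1 s) (pol t s).
  move=> hb hle.
  have : (2 ^+ t * Dbar / D0) * psi P c gamma h (pit t) s (pit t.+1 s) <= 0 by lra.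
  by rewrite pmulr_rle0.
have u_star : forall t s, psi P c gamma h (pit t) s (pit t.+1 s) <=
    psi P c gamma h (pit t) s (pistar s) + D0 / 2 ^+ t.
  move=> t s.
  have := min_ineq t s (pistar s) (Hstar_pol s).
  have := @breg_ge0 R A omega gomega (pit t.+1 s) (pit t s) Hom_cvx Hom_diff (pol t.+1 s) (pol t s).
  have := HDbar s pistar (pit t) Hstar_pol (pol t).
  set e := 2 ^+ t * Dbar / D0 => hD hb hm.
  have he := eta_pos t; rewrite -/e in he.
  have : e * (psi P c gamma h (pit t) s (pit t.+1 s) - psi P c gamma h (pit t) s (pistar s)) <= Dbar.
    rewrite mulrBr; lra.
  rewrite -ler_pdivlMl // => h1.
  have -> : D0 / 2 ^+ t = e^-1 * Dbar.
    have n1 : D0 != 0 by apply/eqP; have := HDelta0; rewrite -/D0; lra.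
    have n2 : (2:R) ^+ t != 0 by apply/eqP; have := pow2_ge1 R t; lra.
    have n3 : Dbar != 0 by apply/eqP; lra.
    by rewrite /e; field; rewrite n1 n2 n3.
  lra.
have w_le : forall t s, V t.+1 s - V t s <= psi P c gamma h (pit t) s (pit t.+1 s).
  move=> t.
  have wrec : forall s, V t.+1 s - V t s =
      gamma * \sum_s0 wgt R S A P (pit t.+1 s) s s0 * (V t.+1 s0 - V t s0)
      + psi P c gamma h (pit t) s (pit t.+1 s).
    move=> s; rewrite (PT _ s (pit t.+1 s) (pol t) (pol t.+1 s)).
    rewrite -TD /V {1}(VT (pit t.+1) s (pol t.+1)); ring.
  have hz : forall s, V t.+1 s - V t s <=
      gamma * \sum_s0 wgt R S A P (pit t.+1 s) s s0 * (V t.+1 s0 - V t s0)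
      + psi P c gamma h (pit t) s (pit t.+1 s).
    by move=> s; rewrite {1}wrec.
  have wle0 : forall s, V t.+1 s - V t s <= 0.
    move=> s.
    have L := @Lmax R S gamma (fun s s0 => wgt R S A P (pit t.+1 s) s s0)
      (fun s => V t.+1 s - V t s) (fun s => psi P c gamma h (pit t) s (pit t.+1 s)) 0 Hg
      (fun s s0 => WG _ s s0 (pol t.+1 s)) (fun s => WS _ s (pol t.+1 s)) hz (u_le0 t) s.
    by move: L; rewrite pmulr_rle0 // subr_gt0.
  move=> s; rewrite wrec.
  have : \sum_s0 wgt R S A P (pit t.+1 s) s s0 * (V t.+1 s0 - V t s0) <= 0.
    apply: wavg_le => //; [move=> s0; exact: WG (pol t.+1 s) | exact: WS (pol t.+1 s)].
  move=> hs; have : gamma * \sum_s0 wgt R S A P (pit t.+1 s) s s0 * (V t.+1 s0 - V t s0) <= 0.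
    exact: mulr_ge0_le0.
  lra.
have [hN hNu] := @Nconst_props R gamma Hg.
pose Q := fun t b => forall s, V t s - Vs s <= b.
have Qm : forall t b b', Q t b -> b <= b' -> Q t b'.
  by move=> t b b' H hb s; apply: le_trans (H s) hb.
have Q1 : forall t b, Q t b -> Q t.+1 b.
  move=> t b H s; have h1 := w_le t s; have h2 := u_le0 t s; have h3 := H s; lra.
have Q2 : forall t b, Q t b -> Q t.+1 (gamma * b + D0 / 2 ^+ t).
  move=> t b H s.
  have h1 := w_le t s; have h2 := u_star t s.
  rewrite (PT _ s (pistar s) (pol t) (Hstar_pol s)) in h2.
  rewrite -[Vf P c gamma h (pit t)]/(V t) in h2.
  have h3 := TL (pistar s) (V t) Vs s b (Hstar_pol s) H.
  have h4 := VT pistar s Hstar_pol.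
  rewrite -/Vs in h4.
  lra.
have Q0 : Q 0%N D0.
  set G := sup (range (gap P c gamma h (pit 0%N))).
  have hz : forall s, V 0%N s - Vs s <= gamma * \sum_s0 wgt R S A P (pistar s) s s0 * (V 0%N s0 - Vs s0)
      + - psi P c gamma h (pit 0%N) s (pistar s).
    move=> s; rewrite (PT _ s (pistar s) (pol 0%N) (Hstar_pol s)).
    rewrite -[Vf P c gamma h (pit 0%N)]/(V 0%N) -TD.
    have h4 := VT pistar s Hstar_pol; rewrite -/Vs in h4.
    lra.
  have he : forall s, - psi P c gamma h (pit 0%N) s (pistar s) <= G.
    move=> s; apply: le_trans (@gap_ge R S A P c gamma h (pit 0%N) s (pistar s) (Hh_cvx s) (Hstar_pol s)) _.
    exact: range_le.
  move=> s.
  have L := @Lmax R S gamma (fun s s0 => wgt R S A P (pistar s) s s0)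
      (fun s => V 0%N s - Vs s) (fun s => - psi P c gamma h (pit 0%N) s (pistar s)) G Hg
      (fun s s0 => WG _ s s0 (Hstar_pol s)) (fun s => WS _ s (Hstar_pol s)) hz he s.
  rewrite /D0 /Delta0 -/G mulrC ler_pdivlMr; last by lra.
  by rewrite mulrC.
move=> t s.
exact: (@arith_main R gamma D0 (Nconst gamma) Q Hg hN hNu (ltW HDelta0) Qm Q1 Q2 Q0 t s).
Qed.
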